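(* Assume each $f_a$ is differentiable on $(0,1]$ with $f_a'>0$, and set $\phi_a(u)=1/f_a'(u)$. Let $\mathcal D_0\subseteq\mathcal D$ be open, $\theta\in\mathcal D_0$, and assume that $\alpha$ and each $p_{\cdot,a}$ are differentiable at $\theta$. Assume the regularity condition $\sum_{a\in A}\frac{\partial}{\partial\theta_j}p_{\theta,a}=0$ and that $z(\theta)=\sum'_a\phi_a(p_{\theta,a})<+\infty$, where $\sum'$ denotes summation over $a\in A\setminus A_0(\theta)$, $A_0(\theta)=\{a:p_{\theta,a}=0\}$. Then $$\frac{\partial\alpha}{\partial\theta_j}(\theta)=-\frac1{z(\theta)}\sum\nolimits'_a\phi_a(p_{\theta,a})H_j(a).$$
   Context: Let $A$ be a finite or countable set, $\mathcal M_1^+(A)$ the probability distributions on $A$. For each $a$, $h_a:[0,1]\to\mathbb R$ is continuous, strictly concave, $h_a(0)=h_a(1)=0$, differentiable on $(0,1)$ with $h_a'=-f_a$, $f_a$ continuous on $(0,1]$; $I(p)=\sum_ah_a(p_a)$. $H_1,\dots,H_n:A\to\mathbb R$ are bounded below, $\langle p,X\rangle=\sum_ap_aX(a)$. $p^*$ satisfies the variational principle with parameters $\theta\in\mathbb R^n$ if $+\infty>I(p^* )-\sum_j\theta_j\langle p^*,H_j\rangle\ge I(p)-\sum_j\theta_j\langle p,H_j\rangle$ for all $p$. $\mathcal D$ is the set of $\theta$ for which such $p^*$ exists; it is unique and denoted $p_\theta$, and there is a real number $\alpha(\theta)$ with $f_a(p_{\theta,a})=-\alpha(\theta)-\sum_j\theta_jH_j(a)$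 for every $a$ with $p_{\theta,a}>0$. *)

(* Defs.v *)
From Stdlib Require Import Reals List.
Open Scope R_scope.

Definition lsum {A : Type} (f : A -> R) (F : list A) : R :=
  fold_right (fun a acc => f a + acc) 0 F.

(* Unconditional summation: [has_sumA f s] iff sum_{a in A} f a = s,
   i.e. the net of finite partial sums converges to s. *)
Definition has_sumA {A : Type} (f : A -> R) (s : R) : Prop :=
  forall eps, eps > 0 -> exists F0 : list A,
    forall F : list A, NoDup F -> incl F0 F -> Rabs (lsum f F - s) < eps.

Definition summableA {A : Type} (f : A -> R) : Prop := exists s, has_sumA f s.

Definition prob {A : Type} (p : A -> R) : Prop :=
  (forall a, 0 <= p a) /\ has_sumA p 1.

(* ---------- Vectors theta in R^n, modelled as nat -> R (coords j < n) --- *)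
Fixpoint sumn (n : nat) (g : nat -> R) : R :=
  match n with O => 0 | S k => sumn k g + g k end.

Fixpoint normn (n : nat) (x : nat -> R) : R :=
  match n with O => 0 | S k => Rmax (normn k x) (Rabs (x k)) end.

Definition vsub (x y : nat -> R) : nat -> R := fun k => x k - y k.

Definition shift (x : nat -> R) (j : nat) (t : R) : nat -> R :=
  fun k => if Nat.eqb k j then x k + t else x k.

Definition openn (n : nat) (D : (nat -> R) -> Prop) : Prop :=
  forall x, D x -> exists delta, delta > 0 /\
    forall y, normn n (vsub y x) < delta -> D y.

Definition differentiable_at (n : nat) (F : (nat -> R) -> R) (x : nat -> R) : Prop :=
  exists g : nat -> R, forall eps, eps > 0 -> exists delta, delta > 0 /\
    forall y, normn n (vsub y x) < delta ->
      Rabs (F y - F x - sumn n (fun k => g k * (y k - x k)))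
        <= eps * normn n (vsub y x).

Definition cont_within (P : R -> Prop) (g : R -> R) (u : R) : Prop :=
  forall eps, eps > 0 -> exists delta, delta > 0 /\
    forall v, P v -> Rabs (v - u) < delta -> Rabs (g v - g u) < eps.

Definition deriv_within (P : R -> Prop) (g : R -> R) (u l : R) : Prop :=
  forall eps, eps > 0 -> exists delta, delta > 0 /\
    forall v, P v -> v <> u -> Rabs (v - u) < delta ->
      Rabs ((g v - g u) / (v - u) - l) < eps.

Definition I01 (u : R) : Prop := 0 <= u <= 1.
Definition I01c (u : R) : Prop := 0 < u <= 1.

Definition strictly_concave01 (g : R -> R) : Prop :=
  forall x y t, I01 x -> I01 y -> x <> y -> 0 < t < 1 ->
    g (t * x + (1 - t) * y) > t * g x + (1 - t) * g y.

Definition standing_h_f {A : Type} (h f : A -> R -> R) : Prop :=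
  forall a,
    (forall u, I01 u -> cont_within I01 (h a) u) /\
    strictly_concave01 (h a) /\
    h a 0 = 0 /\ h a 1 = 0 /\
    (forall u, 0 < u < 1 -> derivable_pt_lim (h a) u (- f a u)) /\
    (forall u, I01c u -> cont_within I01c (f a) u).

(* Value of  I(p) - sum_j theta_j <p,H_j>  in the finite case, given the
   values Ip = I(p) and e j = <p,H_j>.  Terms with theta_j = 0 vanish
   (convention 0 * (+oo) = 0). *)
Definition vp_value (n : nat) (theta : nat -> R) (Ip : R) (e : nat -> R) : R :=
  Ip - sumn n (fun j => theta j * e j).

Definition vp_finite {A : Type} (h : A -> R -> R) (n : nat) (H : nat -> A -> R)
  (theta : nat -> R) (p : A -> R) (Ip : R) (e : nat -> R) : Prop :=
  has_sumA (fun a => h a (p a)) Ip /\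
  (forall j, (j < n)%nat -> theta j <> 0 -> has_sumA (fun a => p a * H j a) (e j)).

(* the expression I(p) - sum_j theta_j <p,H_j> equals +oo / contains -oo
   (H_j bounded below and h_a >= 0, so non-summability means +oo) *)
Definition vp_posinf {A : Type} (h : A -> R -> R) (n : nat) (H : nat -> A -> R)
  (theta : nat -> R) (p : A -> R) : Prop :=
  ~ summableA (fun a => h a (p a)) \/
  exists j, (j < n)%nat /\ theta j < 0 /\ ~ summableA (fun a => p a * H j a).

Definition vp_neginf {A : Type} (n : nat) (H : nat -> A -> R)
  (theta : nat -> R) (p : A -> R) : Prop :=
  exists j, (j < n)%nat /\ theta j > 0 /\ ~ summableA (fun a => p a * H j a).

(* pstar satisfies the variational principle with parameters theta:
   +oo > I(pstar) - sum theta_j <pstar,H_j> >= I(p) - sum theta_j <p,H_j>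
   for every p in M_1^+(A) for which the right-hand side is a well-defined
   element of [-oo,+oo]. *)
Definition variational_principle {A : Type} (h : A -> R -> R) (n : nat)
  (H : nat -> A -> R) (theta : nat -> R) (pstar : A -> R) : Prop :=
  prob pstar /\
  exists Is es, vp_finite h n H theta pstar Is es /\
  forall p, prob p ->
    ~ (vp_posinf h n H theta p /\ ~ vp_neginf n H theta p) /\
    (forall Ip e, vp_finite h n H theta p Ip e ->
       vp_value n theta Is es >= vp_value n theta Ip e).

(* restricted sum  sum'_a g a  over a in A \ A_0 (i.e. p a > 0) *)
Definition restr {A : Type} (p : A -> R) (g : A -> R) : A -> R :=
  fun a => if Rlt_dec 0 (p a) then g a else 0.

(* Main.v *)
Require Import Defs.
From Stdlib Require Import Reals List Lra Lia Classical FunctionalExtensionality.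
Open Scope R_scope.

Lemma nodup_sup {A : Type} (L : list A) :
  exists F, NoDup F /\ (forall x, In x F <-> In x L).
Proof.
  induction L as [|x L IH].
  - exists nil; split; [constructor| simpl; tauto].
  - destruct IH as [F [HF HI]].
    destruct (classic (In x F)) as [Hx|Hx].
    + exists F; split; auto. intro y; simpl; rewrite HI. split; [tauto|].
      intros [<-|H]; [apply HI; auto|auto].
    + exists (x :: F); split; [constructor; auto|].
      intro y; simpl; rewrite HI; tauto.
Qed.

Lemma lsum_nonneg {A : Type} (g : A -> R) F : (forall x, 0 <= g x) -> 0 <= lsum g F.
Proof. intros Hg; induction F; simpl; [lra|]. specialize (Hg a); lra. Qed.

Lemma lsum_ge {A : Type} (g : A -> R) F a : (forall x, 0 <= g x) -> In a F -> g a <= lsum g F.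
Proof.
  intros Hg; induction F as [|b F IH]; simpl; [tauto|].
  intros [->|Hi].
  - pose proof (lsum_nonneg g F Hg); lra.
  - pose proof (IH Hi); pose proof (Hg b); lra.
Qed.

Lemma has_sum_ge {A : Type} (g : A -> R) s a :
  has_sumA g s -> (forall x, 0 <= g x) -> g a <= s.
Proof.
  intros Hs Hg. destruct (Rle_dec (g a) s) as [|Hn]; auto. exfalso.
  destruct (Hs (g a - s)) as [F0 HF0]; [lra|].
  destruct (nodup_sup (a :: F0)) as [F [HF HI]].
  assert (Hin : In a F) by (apply HI; simpl; auto).
  assert (Hinc : incl F0 F) by (intros y Hy; apply HI; simpl; auto).
  specialize (HF0 F HF Hinc). pose proof (lsum_ge g F a Hg Hin).
  apply Rabs_def2 in HF0. lra.
Qed.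

Lemma has_sum_ext {A : Type} (g1 g2 : A -> R) s :
  (forall x, g1 x = g2 x) -> has_sumA g1 s -> has_sumA g2 s.
Proof. intros E H; replace g2 with g1; auto. apply functional_extensionality; auto. Qed.

Lemma lsum_plus {A : Type} (f g : A -> R) F : lsum (fun x => f x + g x) F = lsum f F + lsum g F.
Proof. induction F; simpl; [lra|]. rewrite IHF; lra. Qed.

Lemma lsum_scal {A : Type} (f : A -> R) c F : lsum (fun x => c * f x) F = c * lsum f F.
Proof. induction F; simpl; [lra|]. rewrite IHF; lra. Qed.

Lemma has_sum_plus {A : Type} (f g : A -> R) s t :
  has_sumA f s -> has_sumA g t -> has_sumA (fun x => f x + g x) (s + t).
Proof.
  intros Hf Hg eps He.
  destruct (Hf (eps/2)) as [F1 H1]; [lra|]. destruct (Hg (eps/2)) as [F2 H2]; [lra|].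
  exists (F1 ++ F2). intros F HF Hi.
  assert (incl F1 F) by (intros y Hy; apply Hi; apply in_or_app; auto).
  assert (incl F2 F) by (intros y Hy; apply Hi; apply in_or_app; auto).
  specialize (H1 F HF H). specialize (H2 F HF H0). rewrite lsum_plus.
  apply Rabs_def2 in H1; apply Rabs_def2 in H2. apply Rabs_def1; lra.
Qed.

Lemma has_sum_scal {A : Type} (f : A -> R) c s :
  has_sumA f s -> has_sumA (fun x => c * f x) (c * s).
Proof.
  intros Hf eps He.
  destruct (Hf (eps / (Rabs c + 1))) as [F0 H0].
  { apply Rdiv_lt_0_compat; [lra|]. pose proof (Rabs_pos c); lra. }
  exists F0. intros F HF Hi. specialize (H0 F HF Hi). rewrite lsum_scal.
  replace (c * lsum f F - c * s) with (c * (lsum f F - s)) by ring.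
  rewrite Rabs_mult. pose proof (Rabs_pos c).
  pose proof (Rabs_pos (lsum f F - s)).
  assert (Rabs (lsum f F - s) * (Rabs c + 1) < eps).
  { apply (Rmult_lt_compat_r (Rabs c + 1)) in H0; [|lra].
    unfold Rdiv in H0. rewrite Rmult_assoc, Rinv_l in H0; lra. }
  nra.
Qed.

Lemma prob_le1 {A : Type} (p : A -> R) a : prob p -> p a <= 1.
Proof. intros [H0 H1]. apply (has_sum_ge p 1 a H1 H0). Qed.

Lemma prob_pos {A : Type} (p : A -> R) : prob p -> exists a, p a > 0.
Proof.
  intros [H0 H1]. apply NNPP; intro Hn.
  assert (Hz : forall a, p a = 0).
  { intro a. destruct (H0 a); auto. exfalso; apply Hn; exists a; lra. }
  destruct (H1 1) as [F0 HF]; [lra|].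
  destruct (nodup_sup F0) as [F [HN HI]].
  assert (incl F0 F) by (intros y Hy; apply HI; auto).
  specialize (HF F HN H).
  assert (lsum p F = 0) by (clear -Hz; induction F; simpl; [lra|]; rewrite Hz, IHF; lra).
  rewrite H2 in HF. rewrite Rabs_left in HF; lra.
Qed.
Lemma sumn_plus n (f g : nat -> R) : sumn n (fun k => f k + g k) = sumn n f + sumn n g.
Proof. induction n; simpl; [lra|]. rewrite IHn; lra. Qed.

Lemma sumn_delta n j c : (j < n)%nat -> sumn n (fun k => if Nat.eqb k j then c else 0) = c.
Proof.
  induction n; intros Hj; [lia|]. simpl.
  destruct (Nat.eq_dec j n) as [->|Hne].
  - rewrite Nat.eqb_refl.
    assert (sumn n (fun k => if Nat.eqb k n then c else 0) = 0).
    { clear IHn Hj. assert (forall m, (m <= n)%nat -> sumn m (fun k => if Nat.eqb k n then c else 0) = 0).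
      { induction m; intros; simpl; [lra|]. rewrite IHm by lia.
        destruct (Nat.eqb_spec m n); [lia|lra]. }
      apply H; lia. }
    lra.
  - rewrite IHn by lia. destruct (Nat.eqb_spec n j); [lia|lra].
Qed.

Lemma normn_nonneg n x : 0 <= normn n x.
Proof. induction n; simpl; [lra|]. apply Rle_trans with (1 := IHn), Rmax_l. Qed.

Lemma normn_delta n j t : (j < n)%nat -> normn n (fun k => if Nat.eqb k j then t else 0) = Rabs t.
Proof.
  assert (Hz : forall m, (m <= j)%nat -> normn m (fun k => if Nat.eqb k j then t else 0) = 0).
  { induction m; intros; simpl; [lra|]. rewrite IHm by lia.
    destruct (Nat.eqb_spec m j); [lia|]. rewrite Rabs_R0. apply Rmax_left; lra. }
  induction n; intros Hj; [lia|]. simpl.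
  destruct (Nat.eq_dec j n) as [->|Hne].
  - rewrite Nat.eqb_refl, Hz by lia. apply Rmax_right, Rabs_pos.
  - rewrite IHn by lia. destruct (Nat.eqb_spec n j); [lia|]. rewrite Rabs_R0.
    apply Rmax_left, Rabs_pos.
Qed.

Lemma vsub_shift x j t : vsub (shift x j t) x = (fun k => if Nat.eqb k j then t else 0).
Proof. apply functional_extensionality; intro k. unfold vsub, shift. destruct (Nat.eqb k j); ring. Qed.

Lemma shift0 x j : shift x j 0 = x.
Proof. apply functional_extensionality; intro k. unfold shift. destruct (Nat.eqb k j); ring. Qed.

Lemma sumn_shift n j x t (c : nat -> R) : (j < n)%nat ->
  sumn n (fun k => shift x j t k * c k) = sumn n (fun k => x k * c k) + t * c j.
Proof.
  intros Hj. rewrite <- (sumn_delta n j (t * c j) Hj), <- sumn_plus. f_equal.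
  apply functional_extensionality; intro k. unfold shift. destruct (Nat.eqb_spec k j); subst; ring.
Qed.

Lemma sumn_lin_shift n j x t (g : nat -> R) : (j < n)%nat ->
  sumn n (fun k => g k * (shift x j t k - x k)) = g j * t.
Proof.
  intros Hj. rewrite <- (sumn_delta n j (g j * t) Hj). f_equal.
  apply functional_extensionality; intro k. unfold shift. destruct (Nat.eqb_spec k j); subst; ring.
Qed.

Lemma partial_deriv n F x j : (j < n)%nat -> forall g, 
  (forall eps, eps > 0 -> exists delta, delta > 0 /\
    forall y, normn n (vsub y x) < delta ->
      Rabs (F y - F x - sumn n (fun k => g k * (y k - x k))) <= eps * normn n (vsub y x)) ->
  derivable_pt_lim (fun t => F (shift x j t)) 0 (g j).
Proof.
  intros Hj g Hg eps He.
  destruct (Hg (eps/2)) as [d [Hd Hy]]; [lra|].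
  exists (mkposreal d Hd). intros t Ht Hta. simpl in Hta.
  specialize (Hy (shift x j t)). rewrite vsub_shift, normn_delta in Hy by auto.
  specialize (Hy Hta). rewrite sumn_lin_shift in Hy by auto.
  rewrite Rplus_0_l, shift0.
  replace ((F (shift x j t) - F x) / t - g j) with ((F (shift x j t) - F x - g j * t) / t)
    by (field; auto).
  unfold Rdiv. rewrite Rabs_mult, Rabs_inv.
  assert (0 < Rabs t) by (apply Rabs_pos_lt; auto).
  apply Rmult_le_compat_r with (r := / Rabs t) in Hy; [|left; apply Rinv_0_lt_compat; auto].
  rewrite Rmult_assoc, Rinv_r in Hy by lra. lra.
Qed.
Lemma deriv_cont u d : derivable_pt_lim u 0 d ->
  forall eps, eps > 0 -> exists delta, delta > 0 /\ forall t, Rabs t < delta -> Rabs (u t - u 0) < eps.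
Proof.
  intros Hu eps He. destruct (Hu 1) as [d1 Hd1]; [lra|].
  assert (Hp : 0 < Rabs d + 1) by (pose proof (Rabs_pos d); lra).
  exists (Rmin d1 (eps / (Rabs d + 1))). split.
  { apply Rmin_pos; [apply cond_pos|apply Rdiv_lt_0_compat; lra]. }
  intros t Ht. destruct (Req_dec t 0) as [->|Hn]; [rewrite Rminus_diag, Rabs_R0; lra|].
  specialize (Hd1 t Hn (Rlt_le_trans _ _ _ Ht (Rmin_l _ _))). rewrite Rplus_0_l in Hd1.
  assert (Ht2 := Rlt_le_trans _ _ _ Ht (Rmin_r _ _)).
  assert (Hq : Rabs ((u t - u 0) / t) < Rabs d + 1).
  { pose proof (Rabs_triang_inv ((u t - u 0) / t) d). lra. }
  replace (u t - u 0) with (((u t - u 0) / t) * t) by (field; auto).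
  rewrite Rabs_mult. assert (0 < Rabs t) by (apply Rabs_pos_lt; auto).
  apply Rlt_le_trans with ((Rabs d + 1) * Rabs t).
  - apply Rmult_lt_compat_r; auto.
  - apply Rmult_lt_compat_l with (r := Rabs d + 1) in Ht2; auto.
    unfold Rdiv in Ht2. rewrite <- Rmult_assoc, (Rmult_comm _ eps), Rmult_assoc, Rinv_r in Ht2; lra.
Qed.

Lemma chain_within (P : R -> Prop) g u l d delta0 :
  deriv_within P g (u 0) l -> derivable_pt_lim u 0 d -> delta0 > 0 ->
  (forall t, Rabs t < delta0 -> P (u t)) ->
  derivable_pt_lim (fun t => g (u t)) 0 (l * d).
Proof.
  intros Hg Hu Hd0 HP eps He.
  set (q := fun v => if Req_EM_T v (u 0) then l else (g v - g (u 0)) / (v - u 0)).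
  assert (Hp : 0 < Rabs d + 1) by (pose proof (Rabs_pos d); lra).
  assert (Hl : 0 < Rabs l + 1) by (pose proof (Rabs_pos l); lra).
  destruct (Hg (eps / 2 / (Rabs d + 1))) as [d1 [Hd1 Hq]].
  { apply Rdiv_lt_0_compat; lra. }
  destruct (deriv_cont u d Hu d1 Hd1) as [d2 [Hd2 Hc]].
  destruct (Hu (Rmin 1 (eps / 2 / (Rabs l + 1)))) as [d3 Hd3].
  { apply Rmin_pos; [lra|apply Rdiv_lt_0_compat; lra]. }
  assert (Hd : 0 < Rmin (Rmin delta0 d2) d3).
  { apply Rmin_pos; [apply Rmin_pos; auto|apply cond_pos]. }
  exists (mkposreal _ Hd). intros t Ht Hta. simpl in Hta.
  assert (Ht0 : Rabs t < delta0) by (eapply Rlt_le_trans; [apply Hta|]; eapply Rle_trans; apply Rmin_l).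
  assert (Ht2 : Rabs t < d2) by (eapply Rlt_le_trans; [apply Hta|]; eapply Rle_trans; [apply Rmin_l|apply Rmin_r]).
  assert (Ht3 : Rabs t < d3) by (eapply Rlt_le_trans; [apply Hta|]; apply Rmin_r).
  specialize (Hd3 t Ht Ht3). rewrite Rplus_0_l in *.
  set (r := (u t - u 0) / t) in *.
  assert (Hr1 : Rabs (r - d) < 1) by (eapply Rlt_le_trans; [apply Hd3|apply Rmin_l]).
  assert (Hr2 : Rabs (r - d) < eps / 2 / (Rabs l + 1)) by (eapply Rlt_le_trans; [apply Hd3|apply Rmin_r]).
  assert (Hrb : Rabs r <= Rabs d + 1).
  { pose proof (Rabs_triang_inv r d). lra. }
  assert (Hqv : Rabs (q (u t) - l) < eps / 2 / (Rabs d + 1)).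
  { unfold q. destruct (Req_EM_T (u t) (u 0)).
    - rewrite Rminus_diag, Rabs_R0. apply Rdiv_lt_0_compat; lra.
    - apply Hq; auto. }
  assert (Heq : (g (u t) - g (u 0)) / t = q (u t) * r).
  { unfold q, r. destruct (Req_EM_T (u t) (u 0)) as [E|E].
    - rewrite E. unfold Rdiv; ring.
    - field. split; auto. intro; apply E; lra. }
  rewrite Heq.
  replace (q (u t) * r - l * d) with ((q (u t) - l) * r + l * (r - d)) by ring.
  eapply Rle_lt_trans; [apply Rabs_triang|]. rewrite !Rabs_mult.
  assert (A1 : Rabs (q (u t) - l) * Rabs r <= eps / 2).
  { apply Rle_trans with (eps / 2 / (Rabs d + 1) * (Rabs d + 1)).
    - apply Rmult_le_compat; try apply Rabs_pos; lra.
    - right; field; lra. }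
  assert (A2 : Rabs l * Rabs (r - d) < eps / 2).
  { apply Rle_lt_trans with ((Rabs l + 1) * Rabs (r - d)).
    - apply Rmult_le_compat_r; [apply Rabs_pos|lra].
    - apply Rmult_lt_compat_l with (r := Rabs l + 1) in Hr2; auto.
      replace ((Rabs l + 1) * (eps / 2 / (Rabs l + 1))) with (eps/2) in Hr2 by (field; lra). auto. }
  lra.
Qed.

Lemma deriv_local u v l delta : delta > 0 -> (forall t, Rabs t < delta -> u t = v t) ->
  derivable_pt_lim u 0 l -> derivable_pt_lim v 0 l.
Proof.
  intros Hd Heq Hu eps He. destruct (Hu eps He) as [d1 H1].
  assert (Hm : 0 < Rmin d1 delta) by (apply Rmin_pos; [apply cond_pos|auto]).
  exists (mkposreal _ Hm). intros t Ht Hta; simpl in Hta.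
  rewrite Rplus_0_l in *.
  rewrite <- (Heq t), <- (Heq 0).
  - specialize (H1 t Ht (Rlt_le_trans _ _ _ Hta (Rmin_l _ _))). rewrite Rplus_0_l in H1; auto.
  - rewrite Rabs_R0; auto.
  - eapply Rlt_le_trans; [apply Hta|apply Rmin_r].
Qed.

Lemma deriv_min0 u d delta : derivable_pt_lim u 0 d -> u 0 = 0 -> delta > 0 ->
  (forall t, Rabs t < delta -> 0 <= u t) -> d = 0.
Proof.
  intros Hu H0 Hd Hp.
  destruct (Rtotal_order d 0) as [Hlt|[Heq|Hgt]]; auto; exfalso.
  - destruct (Hu (- d)) as [d1 H1]; [lra|].
    set (t := Rmin d1 delta / 2).
    assert (0 < Rmin d1 delta) by (apply Rmin_pos; [apply cond_pos|auto]).
    assert (Rabs t < d1 /\ Rabs t < delta).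
    { unfold t; rewrite Rabs_right by lra. pose proof (Rmin_l d1 delta); pose proof (Rmin_r d1 delta); lra. }
    specialize (H1 t ltac:(unfold t; lra) (proj1 H2)). rewrite Rplus_0_l, H0 in H1.
    pose proof (Hp t (proj2 H2)).
    assert (0 <= (u t - 0) / t) by (unfold Rdiv; apply Rmult_le_pos; [lra|left; apply Rinv_0_lt_compat; unfold t; lra]).
    apply Rabs_def2 in H1. lra.
  - destruct (Hu d) as [d1 H1]; [lra|].
    set (t := - (Rmin d1 delta / 2)).
    assert (0 < Rmin d1 delta) by (apply Rmin_pos; [apply cond_pos|auto]).
    assert (Rabs t < d1 /\ Rabs t < delta).
    { unfold t; rewrite Rabs_left by lra. pose proof (Rmin_l d1 delta); pose proof (Rmin_r d1 delta); lra. }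
    specialize (H1 t ltac:(unfold t; lra) (proj1 H2)). rewrite Rplus_0_l, H0 in H1.
    pose proof (Hp t (proj2 H2)).
    assert ((u t - 0) / t <= 0).
    { unfold Rdiv. rewrite Rminus_0_r. assert (/ t < 0) by (apply Rinv_lt_0_compat; unfold t; lra). nra. }
    apply Rabs_def2 in H1. lra.
Qed.
Theorem mainTheorem9
  (A : Type) (h f fp : A -> R -> R) (n : nat) (H : nat -> A -> R)
  (D0 : (nat -> R) -> Prop) (p : (nat -> R) -> A -> R) (alpha : (nat -> R) -> R)
  (theta : nat -> R) (j : nat) (z : R)
  (* A finite or countable *)
  (hA : exists enc : A -> nat, forall x y, enc x = enc y -> x = y)
  (* standing assumptions on h_a, f_a *)
  (hhf : standing_h_f h f)
  (* H_j bounded below *)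
  (hH : forall k, (k < n)%nat -> exists M, forall a, M <= H k a)
  (* f_a differentiable on (0,1] with derivative f_a' = fp a > 0 *)
  (hf' : forall a u, I01c u -> deriv_within I01c (f a) u (fp a u) /\ fp a u > 0)
  (* D0 open, D0 subset of D, p_theta' and alpha(theta') as in the context *)
  (hD0 : openn n D0)
  (hvp : forall th, D0 th -> variational_principle h n H th (p th))
  (halpha : forall th, D0 th -> forall a, p th a > 0 ->
       f a (p th a) = - alpha th - sumn n (fun k => th k * H k a))
  (htheta : D0 theta)
  (hdalpha : differentiable_at n alpha theta)
  (hdp : forall a, differentiable_at n (fun th => p th a) theta)
  (hj : (j < n)%nat)
  (* regularity condition: sum_a d/dtheta_j p_{theta,a} = 0 *)
  (hreg : exists d : A -> R,
       (forall a, derivable_pt_lim (fun t => p (shift theta j t) a) 0 (d a)) /\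
       has_sumA d 0)
  (* z(theta) = sum'_a phi_a(p_{theta,a}) < +oo, phi_a = 1 / f_a' *)
  (hz : has_sumA (restr (p theta) (fun a => / fp a (p theta a))) z) :
  exists S : R,
    has_sumA (restr (p theta) (fun a => / fp a (p theta a) * H j a)) S /\
    derivable_pt_lim (fun t => alpha (shift theta j t)) 0 (- (/ z) * S).
Proof.
  destruct hdalpha as [g Hg].
  pose proof (partial_deriv n alpha theta j hj g Hg) as Hda.
  destruct (hD0 theta htheta) as [d0 [Hd0 HD]].
  assert (HDs : forall t, Rabs t < d0 -> D0 (shift theta j t)).
  { intros t Ht. apply HD. rewrite vsub_shift, normn_delta; auto. }
  destruct hreg as [d [Hd Hsd]].
  assert (Hpr : forall a, 0 <= p theta a /\ p theta a <= 1).
  { intro a. destruct (hvp theta htheta) as [Hp _]. split; [apply (proj1 Hp)|apply prob_le1; auto]. }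
  assert (Key : forall a, d a = restr (p theta) (fun a => -(g j + H j a) * / fp a (p theta a)) a).
  { intro a. unfold restr. set (u := fun t => p (shift theta j t) a).
    assert (Hu0 : u 0 = p theta a) by (unfold u; rewrite shift0; auto).
    assert (Hdu : derivable_pt_lim u 0 (d a)) by apply Hd.
    destruct (Rlt_dec 0 (p theta a)) as [Hpos|Hnp].
    - destruct (deriv_cont u (d a) Hdu (p theta a) Hpos) as [d1 [Hd1 Hc]].
      assert (Hm : 0 < Rmin d0 d1) by (apply Rmin_pos; auto).
      assert (Hin : forall t, Rabs t < Rmin d0 d1 -> D0 (shift theta j t) /\ u t > 0).
      { intros t Ht. split.
        - apply HDs. eapply Rlt_le_trans; [apply Ht|apply Rmin_l].
        - assert (Rabs t < d1) by (eapply Rlt_le_trans; [apply Ht|apply Rmin_r]).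
          specialize (Hc t H0). rewrite Hu0 in Hc. apply Rabs_def2 in Hc. lra. }
      assert (HI : forall t, Rabs t < Rmin d0 d1 -> I01c (u t)).
      { intros t Ht. destruct (Hin t Ht) as [HDt Hut]. split; [lra|].
        unfold u. apply prob_le1. apply (hvp _ HDt). }
      assert (HI0 : I01c (u 0)) by (apply HI; rewrite Rabs_R0; auto).
      destruct (hf' a (u 0) HI0) as [Hfw Hfp].
      pose proof (chain_within I01c (f a) u (fp a (u 0)) (d a) _ Hfw Hdu Hm HI) as Hch.
      set (c := sumn n (fun k => theta k * H k a)).
      assert (Hv : derivable_pt_lim
        (minus_fct (fun t => - alpha (shift theta j t)) (fun t => c + t * H j a)) 0 (- g j - (0 + 1 * H j a))).
      { apply derivable_pt_lim_minus.
        - apply (derivable_pt_lim_opp (fun t => alpha (shift theta j t))); auto.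
        - apply (derivable_pt_lim_plus (fun _ => c) (fun t => t * H j a)). apply derivable_pt_lim_const.
          apply (derivable_pt_lim_scal_right id 0 1 (H j a)). apply derivable_pt_lim_id. }
      unfold minus_fct in Hv.
      assert (Hloc : forall t, Rabs t < Rmin d0 d1 ->
        f a (u t) = - alpha (shift theta j t) - (c + t * H j a)).
      { intros t Ht. destruct (Hin t Ht) as [HDt Hut]. unfold u in *.
        rewrite halpha by auto. unfold c. rewrite sumn_shift by auto. ring. }
      pose proof (deriv_local _ _ _ _ Hm Hloc Hch) as Hch2.
      pose proof (uniqueness_limite _ _ _ _ Hch2 Hv) as Heq.
      rewrite Hu0 in Heq, Hfp.
      apply (Rmult_eq_reg_l (fp a (p theta a))); [|lra].
      rewrite Heq. field. lra.
    - assert (Hz : p theta a = 0) by (destruct (Hpr a); lra).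
      apply (deriv_min0 u (d a) d0 Hdu); [rewrite Hu0; auto|auto|].
      intros t Ht. unfold u. apply (proj1 (proj1 (hvp _ (HDs t Ht)))). }
  assert (Hphi : forall a, 0 <= restr (p theta) (fun a => / fp a (p theta a)) a).
  { intro a. unfold restr. destruct (Rlt_dec 0 (p theta a)); [|lra].
    destruct (hf' a (p theta a)) as [_ Hf]; [split; [auto|apply Hpr]|].
    left; apply Rinv_0_lt_compat; auto. }
  assert (Hzpos : z > 0).
  { destruct (prob_pos (p theta) (proj1 (hvp theta htheta))) as [a0 Ha0].
    pose proof (has_sum_ge _ _ a0 hz Hphi).
    unfold restr in *. destruct (Rlt_dec 0 (p theta a0)); [|lra].
    destruct (hf' a0 (p theta a0)) as [_ Hf]; [split; [auto|apply Hpr]|].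
    assert (0 < / fp a0 (p theta a0)) by (apply Rinv_0_lt_compat; auto). lra. }
  exists (- g j * z). split.
  - pose proof (has_sum_plus _ _ _ _ (has_sum_scal d (-1) 0 Hsd) (has_sum_scal _ (- g j) z hz)) as Hs.
    replace (-1 * 0 + - g j * z) with (- g j * z) in Hs by ring.
    refine (has_sum_ext _ _ _ _ Hs).
    intro a. rewrite Key. unfold restr. destruct (Rlt_dec 0 (p theta a)); ring.
  - replace (- / z * (- g j * z)) with (g j) by (field; lra). auto.
Qed.
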